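(* Assume that the optimizer $x^*$ of the DC-OPF problem satisfies $x^*_n>0$ for all $n\in\{1,\dots,N\}$. Then there exists a unique efficient bid $b^*\in\mathbb R^N_{\ge0}$, given by $b^*_n=\nabla f_n(x^*_n)=2a_nx^*_n+c_n$ for all $n$.
   Context: Network: a directed graph $\mathcal G=(\mathcal V,\mathcal E)$ with buses $\mathcal V=\{1,\dots,N_b\}$ and power lines $\mathcal E$; $\mathcal N_i^+=\{j:(i,j)\in\mathcal E\}$, $\mathcal N_i^-=\{j:(j,i)\in\mathcal E\}$. Each line $(i,j)$ carries flow $z_{ij}\in\mathbb R$ with limit $\bar z_{ij}>0$. There are $N$ generators labelled $1,\dots,N$; $G_i$ is the (possibly empty) set of generators at bus $i$, the $G_i$ partition $\{1,\dots,N\}$. Bus $i$ has load $y_i\ge0$. Generator $n$ has cost $f_n(x)=a_nx^2+c_nx$ with $a_n>0$, $c_n\ge 0$. DC-OPF: minimize $\sum_{n=1}^N f_n(x_n)$ over $(x,z)$ subject to $\sum_{j\in\mathcal N_i^+}z_{ij}-\sum_{j\in\mathcal N_i^-}z_{ji}=\sum_{n\in G_i}x_n-y_i$ for all buses $i$, $-\bar z_{ij}\le z_{ij}\le\bar z_{ij}$ for all $(i,j)\in\mathcal E$, and $x\ge 0$; assumed feasible, with optimizer $(x^*,z^* )$, $x^*$ unique. S-DC-OPF given bids $b\in\mathbb R^N_{\ge0}$: same constraints, objective $\sum_n b_nx_n$. Efficient bid: $b^*\ge0$ such that $(x^*,z^* )$ is an optimizer of S-DC-OPF with bids $b^*$ and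 $x^*_n=\arg\max_{x\ge0}(b^*_nx-f_n(x))$ for all $n$. *)

(* Defs.v *)
(* scalars in an arbitrary real field R (the statement is
   purely algebraic / order-theoretic; it specialises to the reals). *)
From HB Require Import structures.
From mathcomp Require Import all_boot all_order all_algebra.
Set Implicit Arguments. Unset Strict Implicit. Unset Printing Implicit Defensive.
Import Order.TTheory GRing.Theory Num.Theory.
Local Open Scope ring_scope.

(* Network data:
   - buses      : 'I_Nb
   - lines      : E : {set 'I_Nb * 'I_Nb}  (directed pairs (i,j))
   - line limit : zbar : 'I_Nb * 'I_Nb -> R   (relevant on E)
   - generators : 'I_N, generator n sits at bus gb n, so G_i = [set n | gb n == i]
   - loads      : y : 'I_Nb -> R
   - flows      : z : 'I_Nb * 'I_Nb -> R (only values on E matter)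
   - dispatch   : x : 'I_N -> R *)

Definition gcost (R : realFieldType) (N : nat) (a c : 'I_N -> R) (n : 'I_N) (t : R) : R :=
  a n * t ^+ 2 + c n * t.

(* Feasible set of DC-OPF (and S-DC-OPF: same constraints). *)
Definition opf_feasible (R : realFieldType) (Nb N : nat)
    (E : {set 'I_Nb * 'I_Nb}) (zbar : 'I_Nb * 'I_Nb -> R)
    (gb : 'I_N -> 'I_Nb) (y : 'I_Nb -> R)
    (x : 'I_N -> R) (z : 'I_Nb * 'I_Nb -> R) : Prop :=
  (forall i : 'I_Nb,
      \sum_(e in E | e.1 == i) z e - \sum_(e in E | e.2 == i) z e
      = \sum_(n | gb n == i) x n - y i)
  /\ (forall e, e \in E -> - zbar e <= z e <= zbar e)
  /\ (forall n, 0 <= x n).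

Definition opf_optimizer (R : realFieldType) (Nb N : nat)
    (E : {set 'I_Nb * 'I_Nb}) (zbar : 'I_Nb * 'I_Nb -> R)
    (gb : 'I_N -> 'I_Nb) (y : 'I_Nb -> R)
    (obj : ('I_N -> R) -> R)
    (x : 'I_N -> R) (z : 'I_Nb * 'I_Nb -> R) : Prop :=
  opf_feasible E zbar gb y x z /\
  forall x' z', opf_feasible E zbar gb y x' z' -> obj x <= obj x'.

Definition dcopf_obj (R : realFieldType) (N : nat) (a c : 'I_N -> R)
    (x : 'I_N -> R) : R :=
  \sum_(n < N) gcost a c n (x n).

Definition sdcopf_obj (R : realFieldType) (N : nat) (b : 'I_N -> R)
    (x : 'I_N -> R) : R :=
  \sum_(n < N) b n * x n.

Definition is_argmax_profit (R : realFieldType) (N : nat) (a c : 'I_N -> R)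
    (n : 'I_N) (bn t : R) : Prop :=
  0 <= t /\ forall s, 0 <= s -> bn * s - gcost a c n s <= bn * t - gcost a c n t.

Definition efficient_bid (R : realFieldType) (Nb N : nat)
    (E : {set 'I_Nb * 'I_Nb}) (zbar : 'I_Nb * 'I_Nb -> R)
    (gb : 'I_N -> 'I_Nb) (y : 'I_Nb -> R) (a c : 'I_N -> R)
    (xs : 'I_N -> R) (zs : 'I_Nb * 'I_Nb -> R) (b : 'I_N -> R) : Prop :=
  (forall n, 0 <= b n)
  /\ opf_optimizer E zbar gb y (sdcopf_obj b) xs zs
  /\ (forall n, is_argmax_profit a c n (b n) (xs n)).

(* Main.v *)
Require Import Defs.
From HB Require Import structures.
From mathcomp Require Import all_boot all_order all_algebra.
From mathcomp Require Import ring lra.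
Import Order.TTheory GRing.Theory Num.Theory.
Local Open Scope ring_scope.

Lemma sum_conv (R : realFieldType) (I : finType) (P : pred I) (u v : I -> R) (t : R) :
  \sum_(i | P i) (u i + t * (v i - u i)) =
  \sum_(i | P i) u i + t * (\sum_(i | P i) v i - \sum_(i | P i) u i).
Proof. by rewrite big_split /= -mulr_sumr sumrB. Qed.

Lemma feas_conv (R : realFieldType) (Nb N : nat)
    (E : {set 'I_Nb * 'I_Nb}) (zbar : 'I_Nb * 'I_Nb -> R)
    (gb : 'I_N -> 'I_Nb) (y : 'I_Nb -> R) x z x' z' (t : R) :
  0 <= t -> t <= 1 ->
  opf_feasible E zbar gb y x z -> opf_feasible E zbar gb y x' z' ->
  opf_feasible E zbar gb y (fun n => x n + t * (x' n - x n))
                           (fun e => z e + t * (z' e - z e)).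
Proof.
move=> t0 t1 [f1 [b1 p1]] [f2 [b2 p2]]; split; [|split].
- move=> i; rewrite !sum_conv; move: (f1 i) (f2 i).
  set X := \sum_(e in E | e.1 == i) z e; set Y := \sum_(e in E | e.2 == i) z e.
  set X' := \sum_(e in E | e.1 == i) z' e; set Y' := \sum_(e in E | e.2 == i) z' e.
  move=> e1 e2.
  have -> : X = Y + (\sum_(n | gb n == i) x n - y i) by rewrite -e1; ring.
  have -> : X' = Y' + (\sum_(n | gb n == i) x' n - y i) by rewrite -e2; ring.
  ring.
- move=> e eE; have /andP[l1 u1] := b1 e eE; have /andP[l2 u2] := b2 e eE.
  apply/andP; split; nra.
- move=> n; have := p1 n; have := p2 n; nra.
Qed.

Theorem lemma3p2 (R : realFieldType) (Nb N : nat)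
    (E : {set 'I_Nb * 'I_Nb}) (zbar : 'I_Nb * 'I_Nb -> R)
    (gb : 'I_N -> 'I_Nb) (y : 'I_Nb -> R) (a c : 'I_N -> R)
    (xs : 'I_N -> R) (zs : 'I_Nb * 'I_Nb -> R)
    (hzbar : forall e, e \in E -> 0 < zbar e)
    (hy : forall i, 0 <= y i)
    (ha : forall n, 0 < a n)
    (hc : forall n, 0 <= c n)
    (hopt : opf_optimizer E zbar gb y (dcopf_obj a c) xs zs)
    (hpos : forall n, 0 < xs n) :
  efficient_bid E zbar gb y a c xs zs (fun n => 2 * a n * xs n + c n)
  /\ forall b : 'I_N -> R, efficient_bid E zbar gb y a c xs zs b ->
       forall n, b n = 2 * a n * xs n + c n.
Proof.
have [hfeas hmin] := hopt.
split.
- split; [|split].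
  + move=> n; have := ha n; have := hpos n; have := hc n; nra.
  + split => // x' z' hf'.
    rewrite /sdcopf_obj -subr_ge0 -sumrB.
    set g := \sum_(n < N) _.
    set Q := \sum_(n < N) a n * (x' n - xs n) ^+ 2.
    have Q0 : 0 <= Q by apply: sumr_ge0 => n _; apply: mulr_ge0; [exact: ltW|exact: sqr_ge0].
    have key : forall t, 0 < t -> t <= 1 -> 0 <= g + t * Q.
      move=> t t0 t1.
      have := hmin _ _ (@feas_conv _ _ _ _ _ _ _ _ _ _ _ t (ltW t0) t1 hfeas hf').
      rewrite /dcopf_obj -subr_ge0 -sumrB.
      have -> : \sum_(i < N) (gcost a c i (xs i + t * (x' i - xs i)) - gcost a c i (xs i))
          = t * (g + t * Q).
        rewrite /g /Q mulr_sumr mulrDr !mulr_sumr -big_split /=.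
        apply: eq_bigr => n _; rewrite /gcost; ring.
      by rewrite pmulr_rge0.
    rewrite leNgt; apply/negP => gneg.
    have gQ : 0 < Q - g by lra.
    have := key (- g / (Q - g)).
    have t0 : 0 < - g / (Q - g) by apply: divr_gt0; lra.
    have t1 : - g / (Q - g) <= 1 by rewrite ler_pdivrMr //; lra.
    move=> /(_ t0 t1).
    have -> : g + - g / (Q - g) * Q = (g * (Q - g) - g * Q) / (Q - g).
      by field; rewrite gt_eqF.
    rewrite pmulr_lge0 ?invr_gt0 //; nra.
  + move=> n; split; first exact: ltW.
    move=> s s0; rewrite /gcost; have := mulr_ge0 (ltW (ha n)) (sqr_ge0 (s - xs n)); rewrite expr2 => H; nra.
- move=> b [_ [_ hb]] n.
  have [_ hp] := hb n.
  have an := ha n; have xn := hpos n.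
  set d := b n - c n - 2 * a n * xs n.
  suff : d = 0 by rewrite /d; lra.
  apply/eqP; apply/negPn/negP => dn0.
  have dabs : 0 < `|d| by rewrite normr_gt0.
  set h := xs n * `|d| / (`|d| + 2 * a n * xs n).
  have den : 0 < `|d| + 2 * a n * xs n by nra.
  have h0 : 0 < h by rewrite /h; apply: divr_gt0 => //; nra.
  have hx : h <= xs n by rewrite /h ler_pdivrMr //; nra.
  have ah : a n * h < `|d|.
    rewrite /h mulrA ltr_pdivrMr //; nra.
  have e1 := hp (xs n + h) ltac:(lra).
  have e2 := hp (xs n - h) ltac:(lra).
  move: e1 e2; rewrite /gcost.
  case: (ger0P d) dabs ah => dp dabs ah; rewrite /d in dp dabs ah *; nra.
Qed.
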